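(* There is no unitary $U$ on two qubits $A\otimes B$ such that for every pure qubit state $|\psi\rangle$, both one-qubit reduced states $\rho_A=\mathrm{Tr}_B\big(U(|\psi\rangle\langle\psi|\otimes|0\rangle\langle0|)U^\dagger\big)$ and $\rho_B=\mathrm{Tr}_A\big(U(|\psi\rangle\langle\psi|\otimes|0\rangle\langle0|)U^\dagger\big)$ satisfy $C_l(\rho_A)=C_l(\rho_B)=C_l(|\psi\rangle)$. (That is, without a machine/ancilla system, no unitary acting on input and blank state clones the coherence of all pure states; in particular no such unitary starting from two orthogonal states $|\psi_1\rangle,|\psi_2\rangle$ via $U|\psi_i\rangle|0\rangle=|\Psi_i\rangle$ extends to clone the coherence of every $\alpha|\psi_1\rangle+\beta|\psi_2\rangle$.)
   Context: For a qubit density matrix $\rho$, the $l_1$-norm of coherence in the computational basis is $C_l(\rho)=\sum_{i\neq j}|\langle i|\rho|j\rangle|$; for a pure state $C_l(|\phi\rangle)=C_l(|\phi\rangle\langle\phi|)$. *)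

(* Defs.v *)
(* Complex scalars: an arbitrary numClosedFieldType C
   (e.g. algC; the complex numbers would be an instance). *)
From HB Require Import structures.
From mathcomp Require Import all_boot all_order all_algebra.
Set Implicit Arguments. Unset Strict Implicit. Unset Printing Implicit Defensive.
Import Order.TTheory GRing.Theory Num.Theory.
Local Open Scope ring_scope.

Definition adj (C : numClosedFieldType) m n (A : 'M[C]_(m, n)) : 'M[C]_(n, m) :=
  \matrix_(i, j) (A j i)^*.

Definition unitary (C : numClosedFieldType) n (U : 'M[C]_n) : Prop :=
  U *m adj U = 1%:M.

Definition pure_state (C : numClosedFieldType) n (psi : 'cV[C]_n) : Prop :=
  \sum_i `|psi i 0| ^+ 2 = 1.

Definition proj (C : numClosedFieldType) n (phi : 'cV[C]_n) : 'M[C]_n :=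
  phi *m adj phi.

Definition coh (C : numClosedFieldType) n (rho : 'M[C]_n) : C :=
  \sum_i \sum_(j | j != i) `|rho i j|.

(* two-qubit space A (x) B: basis |a b> has index mxvec_index a b (= 2a + b) *)
Definition tens2 (C : numClosedFieldType) (u v : 'cV[C]_2) : 'cV[C]_(2 * 2) :=
  (mxvec (u *m v^T))^T.

Definition ket0 (C : numClosedFieldType) : 'cV[C]_2 := delta_mx 0 0.

Definition ptrB (C : numClosedFieldType) (rho : 'M[C]_(2 * 2)) : 'M[C]_2 :=
  \matrix_(i, j) \sum_(b < 2) rho (mxvec_index i b) (mxvec_index j b).
Definition ptrA (C : numClosedFieldType) (rho : 'M[C]_(2 * 2)) : 'M[C]_2 :=
  \matrix_(i, j) \sum_(a < 2) rho (mxvec_index a i) (mxvec_index a j).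

(* Main.v *)
Require Import Defs.
From HB Require Import structures.
From mathcomp Require Import all_boot all_order all_algebra.
From mathcomp Require Import ring.
Import Order.TTheory GRing.Theory Num.Theory.
Local Open Scope ring_scope.


Lemma sqn0 (C : numClosedFieldType) (x : C) : x * x^* = 0 -> x = 0.
Proof. by move/eqP; rewrite mul_conjC_eq0 => /eqP. Qed.

Lemma lin (C : numClosedFieldType) (P R S : C) :
  P + 1 * R + 1 * S = 1 -> P + (-1) * R + (-1) * S = 1 ->
  P + 'i * R + (- 'i) * S = 1 -> P + (- 'i) * R + 'i * S = 1 -> P = 1 /\ R = 0.
Proof.
move=> h1 h2 h3 h4.
have d12 : 2 * (R + S) = (P + 1 * R + 1 * S) - (P + (-1) * R + (-1) * S) by ring.
have d34 : ('i * 2) * (R - S) = (P + 'i * R + (- 'i) * S) - (P + (- 'i) * R + 'i * S) by ring.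
rewrite h1 h2 subrr in d12; rewrite h3 h4 subrr in d34.
have n2 : (2 : C) != 0 by rewrite pnatr_eq0.
move/eqP: d12; rewrite mulf_eq0 (negPf n2) /= => /eqP d12.
move/eqP: d34; rewrite !mulf_eq0 (negPf (neq0Ci C)) (negPf n2) /= => /eqP d34.
have hR : 2 * R = (R + S) + (R - S) by ring.
rewrite d12 d34 addr0 in hR.
move/eqP: hR; rewrite mulf_eq0 (negPf n2) /= => /eqP hR.
split => //.
have -> : P = (P + 1 * R + 1 * S) - R - S by ring.
have hS : S = 0 by move/eqP: d34; rewrite hR sub0r oppr_eq0 => /eqP.
by rewrite h1 hR hS !subr0.
Qed.

Lemma inst_core (C : numClosedFieldType) (s w p q X : C) :
  s^* = s -> s * s = 2^-1 -> w * w^* = 1 -> X = s * s * (w * p + w^* * q) ->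
  X * X^* = (s * (s * w^*)^*) * (s * (s * w^*)^*)^* ->
  p * p^* + q * q^* + w ^+ 2 * (p * q^*) + (w^*) ^+ 2 * (q * p^*) = 1.
Proof.
move=> sc ss hw -> .
rewrite !(rmorphD, rmorphM) /= sc !conjCK.
have -> : s * s * (w * p + w^* * q) * (s * s * (w^* * p^* + w * q^*))
   = ((s * s) * (s * s)) * ((w * w^*) * (p * p^* + q * q^*) + w ^+ 2 * (p * q^*) + (w^*) ^+ 2 * (q * p^*)) by ring.
rewrite sc.
have -> : s * (s * w) * (s * (s * w^*)) = ((s * s) * (s * s)) * (w * w^*) by ring.
have nz : (2^-1 * 2^-1 : C) != 0 by rewrite mulf_neq0 // invr_eq0 pnatr_eq0.
rewrite hw mul1r ss => E; apply: (mulfI nz); by rewrite E mulr1.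
Qed.

Lemma derive (C : numClosedFieldType) (a b c d e f g h : C) :
 (forall al be : C, al * al^* + be * be^* = 1 ->
   let X := (a*al+e*be)*(c*al+g*be)^* + (b*al+f*be)*(d*al+h*be)^* in
   X * X^* = (al*be^*)*(al*be^*)^*) ->
 (a*g^* + b*h^*) * (a*g^* + b*h^*)^* + (e*c^* + f*d^*) * (e*c^* + f*d^*)^* = 1 /\
 (a*g^* + b*h^*) * (e*c^* + f*d^*)^* = 0.
Proof.
move=> H.
have EA : a * c^* + b * d^* = 0.
  apply: sqn0; have := H 1 0; rewrite /= !(rmorph1, rmorph0, mulr0, mul0r, mulr1, addr0, mul1r).
  by move=> ->.
have EB : e * g^* + f * h^* = 0.
  apply: sqn0; have := H 0 1; rewrite /= !(rmorph1, rmorph0, mulr0, mul0r, mulr1, addr0, add0r, mul1r).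
  by move=> ->.
set s := sqrtC (2^-1 : C).
have sc : s^* = s by rewrite geC0_conj // sqrtC_ge0 invr_ge0 ler0n.
have ss : s * s = 2^-1 by rewrite -expr2 sqrtCK.
set p := a*g^* + b*h^*; set q := e*c^* + f*d^*.
have inst : forall w : C, w * w^* = 1 ->
    p * p^* + q * q^* + w ^+ 2 * (p * q^*) + (w^*) ^+ 2 * (q * p^*) = 1.
  move=> w hw.
  have pure : s * s^* + (s * w^*) * (s * w^*)^* = 1.
    rewrite !(rmorphM) /= sc conjCK.
    have -> : s * s + s * w^* * (s * w) = (s * s) * (1 + w * w^*) by ring.
    by rewrite hw ss; field.
  have HH := H _ _ pure; rewrite /= in HH.
  refine (@inst_core C s w p q _ sc ss hw _ HH).
  rewrite !(rmorphD, rmorphM) /= sc conjCK.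
  transitivity ((s * s) * ((a * c^* + b * d^*) + w * w^* * (e * g^* + f * h^*) + w * p + w^* * q)).
    rewrite /p /q; ring.
  by rewrite EA EB mulr0 !add0r.
have w1 : (1 : C) * 1^* = 1 by rewrite rmorph1 mulr1.
have i1 := inst 1 w1.
rewrite rmorph1 expr1n in i1.
have w2 : ('i : C) * 'i^* = 1 by rewrite conjCi mulrN -expr2 sqrCi opprK.
have i2 := inst 'i w2.
rewrite conjCi sqrrN sqrCi in i2.
pose om : C := sqrtC 'i.
have hom : om * om^* = 1 by rewrite -normCK -normrX sqrtCK normCi.
have om2 : om ^+ 2 = 'i by exact: sqrtCK.
have omc2 : om^* ^+ 2 = - 'i by rewrite -conjCi -om2 rmorphXn.
have i3 := inst om hom.
rewrite om2 omc2 in i3.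
have w4 : om^* * om^*^* = 1 by rewrite conjCK mulrC.
have i4 := inst om^* w4.
rewrite conjCK omc2 om2 in i4.
have [-> ->] := @lin C _ _ _ i1 i2 i3 i4.
done.
Qed.
Lemma big_ord2 (C : numClosedFieldType) (F : 'I_2 -> C) :
  \sum_(i < 2) F i = F 0 + F 1.
Proof. by rewrite big_ord_recl big_ord1; congr (_ + F _); apply: val_inj. Qed.

Lemma sum4 (C : numClosedFieldType) (F : 'I_(2*2) -> C) :
  \sum_k F k = \sum_(i < 2) \sum_(j < 2) F (mxvec_index i j).
Proof.
rewrite pair_big /= (reindex (uncurry (@mxvec_index 2 2))) /=.
  by apply: eq_bigr => -[i j].
exact: curry_mxvec_bij.
Qed.

Lemma coh2 (C : numClosedFieldType) (M : 'M[C]_2) : coh M = `|M 0 1| + `|M 1 0|.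
Proof.
rewrite /coh !big_ord2 !(big_mkcond (fun j => j != _)) !big_ord2 /=.
by rewrite !add0r !addr0.
Qed.

Lemma projE (C : numClosedFieldType) n (phi : 'cV[C]_n) i j :
  proj phi i j = phi i 0 * (phi j 0)^*.
Proof. by rewrite /proj mxE big_ord1 mxE. Qed.

Lemma phiE (C : numClosedFieldType) (U : 'M[C]_(2*2)) psi k :
  (U *m tens2 psi (ket0 C)) k 0 =
  U k (mxvec_index 0 0) * psi 0 0 + U k (mxvec_index 1 0) * psi 1 0.
Proof.
rewrite mxE sum4 !big_ord2 /tens2 !mxE !mxvecE !mxE !big_ord1 !mxE /=.
ring.
Qed.

Lemma cohB (C : numClosedFieldType) (phi : 'cV[C]_(2*2)) :
  coh (ptrB (proj phi)) =
  `|phi (mxvec_index 0 0) 0 * (phi (mxvec_index 1 0) 0)^*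
    + phi (mxvec_index 0 1) 0 * (phi (mxvec_index 1 1) 0)^*| *+ 2.
Proof.
rewrite coh2 !mxE !big_ord2 !projE mulr2n; congr (_ + _).
by rewrite -norm_conjC !(rmorphD, rmorphM) /= !conjCK mulrC [X in _ + X]mulrC.
Qed.

Lemma cohA (C : numClosedFieldType) (phi : 'cV[C]_(2*2)) :
  coh (ptrA (proj phi)) =
  `|phi (mxvec_index 0 0) 0 * (phi (mxvec_index 0 1) 0)^*
    + phi (mxvec_index 1 0) 0 * (phi (mxvec_index 1 1) 0)^*| *+ 2.
Proof.
rewrite coh2 !mxE !big_ord2 !projE mulr2n; congr (_ + _).
by rewrite -norm_conjC !(rmorphD, rmorphM) /= !conjCK mulrC [X in _ + X]mulrC.
Qed.

Lemma cohP (C : numClosedFieldType) (psi : 'cV[C]_2) :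
  coh (proj psi) = `|psi 0 0 * (psi 1 0)^*| *+ 2.
Proof.
rewrite coh2 !projE mulr2n; congr (_ + _).
by rewrite -norm_conjC !(rmorphD, rmorphM) /= !conjCK mulrC.
Qed.

Lemma sqeq (C : numClosedFieldType) (x y : C) : `|x| *+ 2 = `|y| *+ 2 -> x * x^* = y * y^*.
Proof.
move=> H; rewrite -!normCK; congr (_ ^+ 2).
by apply: (mulIf (x := 2%:R)); rewrite ?pnatr_eq0 // !mulr_natr.
Qed.
Lemma nn (C : numClosedFieldType) (x : C) : 0 <= x * x^*.
Proof. exact: mul_conjC_ge0. Qed.

Lemma lag (C : numClosedFieldType) (a b g h : C) :
  (a*a^* + b*b^*) * (g*g^* + h*h^*) =
  (a*g^* + b*h^*) * (a*g^* + b*h^*)^* + (a*h - b*g) * (a*h - b*g)^*.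
Proof. rewrite !(rmorphD, rmorphB, rmorphM) /= !conjCK; ring. Qed.

Lemma sub_case (C : numClosedFieldType) (X Y Z W L : C) :
  X + Y = 1 -> Z + W = 1 -> X * W = 1 + L -> 0 <= Y -> 0 <= Z -> 0 <= W -> 0 <= L ->
  Y = 0 /\ Z = 0.
Proof.
move=> hN1 hN2 hL hY hZ hW hLL.
have E : Z + Y * W + L = 0.
  have -> : Z + Y * W + L = (Z + W - 1) + (X + Y - 1) * W + (1 + L - X * W) by ring.
  by rewrite hN1 hN2 hL !subrr mul0r !addr0.
move/eqP: E; rewrite paddr_eq0 ?addr_ge0 ?mulr_ge0 // paddr_eq0 ?mulr_ge0 //.
case/andP=> /andP[/eqP Z0 /eqP YW0] _; split => //.
move/eqP: YW0; rewrite mulf_eq0 => /orP[/eqP //|/eqP W0].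
by move: hN2; rewrite Z0 W0 add0r => /eqP; rewrite eq_sym oner_eq0.
Qed.

Lemma sum2_0 (C : numClosedFieldType) (x y : C) : x * x^* + y * y^* = 0 -> x = 0 /\ y = 0.
Proof.
move/eqP; rewrite paddr_eq0 ?nn // => /andP[/eqP /sqn0 -> /eqP /sqn0 ->]; done.
Qed.

Lemma key (C : numClosedFieldType) (a b c d e f g h : C) :
 a*a^* + b*b^* + c*c^* + d*d^* = 1 ->
 e*e^* + f*f^* + g*g^* + h*h^* = 1 ->
 (a*g^* + b*h^*) * (a*g^* + b*h^*)^* + (e*c^* + f*d^*) * (e*c^* + f*d^*)^* = 1 ->
 (a*g^* + b*h^*) * (e*c^* + f*d^*)^* = 0 ->
 (a*f^* + c*h^*) * (a*f^* + c*h^*)^* + (e*b^* + g*d^*) * (e*b^* + g*d^*)^* = 1 -> False.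
Proof.
move=> N1 N2 P PQ P'.
have n2 : forall (C' : numClosedFieldType) (x y : C'), 0 <= x * x^* + y * y^*.
  by move=> C' x y; rewrite addr_ge0 ?nn.
move/eqP: PQ; rewrite mulf_eq0 conjC_eq0 => /orP[] /eqP H.
- rewrite H mul0r add0r in P.
  have L := lag _ e f c d; rewrite P in L.
  have [] := sub_case _ _ (g*g^*+h*h^*) (a*a^*+b*b^*) _ _ _ _ L (n2 _ _ _) (n2 _ _ _) (n2 _ _ _) (nn _ _).
  + by rewrite -N2; ring.
  + by rewrite -N1; ring.
  move=> /sum2_0 [E1 E2] /sum2_0 [E3 E4].
  by move: P'; rewrite ?E1 ?E2 ?E3 ?E4 !(rmorph0, mul0r, mulr0, addr0) => /eqP; rewrite eq_sym oner_eq0.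
- rewrite H mul0r addr0 in P.
  have L := lag _ a b g h; rewrite P in L.
  have [] := sub_case _ _ (c*c^*+d*d^*) (e*e^*+f*f^*) _ _ _ _ L (n2 _ _ _) (n2 _ _ _) (n2 _ _ _) (nn _ _).
  + by rewrite -N1; ring.
  + by rewrite -N2; ring.
  move=> /sum2_0 [E1 E2] /sum2_0 [E3 E4].
  by move: P'; rewrite ?E1 ?E2 ?E3 ?E4 !(rmorph0, mul0r, mulr0, addr0) => /eqP; rewrite eq_sym oner_eq0.
Qed.

Theorem theorem2 (C : numClosedFieldType) :
  ~ (exists U : 'M[C]_(2 * 2),
       unitary U /\
       forall psi : 'cV[C]_2, pure_state psi ->
         let rho := proj (U *m tens2 psi (ket0 C)) in
         coh (ptrB rho) = coh (proj psi) /\ coh (ptrA rho) = coh (proj psi)).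
Proof.
case=> U [hU H].
have hcond : forall al be : C, al * al^* + be * be^* = 1 ->
  let X := (U (mxvec_index 0 0) (mxvec_index 0 0) * al + U (mxvec_index 0 0) (mxvec_index 1 0) * be) *
           (U (mxvec_index 1 0) (mxvec_index 0 0) * al + U (mxvec_index 1 0) (mxvec_index 1 0) * be)^* +
           (U (mxvec_index 0 1) (mxvec_index 0 0) * al + U (mxvec_index 0 1) (mxvec_index 1 0) * be) *
           (U (mxvec_index 1 1) (mxvec_index 0 0) * al + U (mxvec_index 1 1) (mxvec_index 1 0) * be)^* in
  let Y := (U (mxvec_index 0 0) (mxvec_index 0 0) * al + U (mxvec_index 0 0) (mxvec_index 1 0) * be) *
           (U (mxvec_index 0 1) (mxvec_index 0 0) * al + U (mxvec_index 0 1) (mxvec_index 1 0) * be)^* +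
           (U (mxvec_index 1 0) (mxvec_index 0 0) * al + U (mxvec_index 1 0) (mxvec_index 1 0) * be) *
           (U (mxvec_index 1 1) (mxvec_index 0 0) * al + U (mxvec_index 1 1) (mxvec_index 1 0) * be)^* in
  X * X^* = (al * be^*) * (al * be^*)^* /\ Y * Y^* = (al * be^*) * (al * be^*)^*.
  move=> al be hab.
  pose psi : 'cV[C]_2 := \col_i (if i == 0 then al else be).
  have pp : pure_state psi by rewrite /pure_state big_ord2 !mxE /= !normCK.
  have [h1 h2] := H psi pp.
  rewrite /= cohB cohP in h1; rewrite /= cohA cohP in h2.
  move/sqeq: h1; move/sqeq: h2.
  by rewrite !phiE !mxE /= => h2 h1; split.
have hU' : adj U *m U = 1%:M by apply: mulmx1C.
have N : forall j, \sum_k (U k j) * (U k j)^* = 1.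
  move=> j; have := congr1 (fun M : 'M[C]_(2*2) => M j j) hU'.
  rewrite /= !mxE ?eqxx /= ?mulr1n => <-.
  by apply: eq_bigr => k _; rewrite /adj mxE mulrC.
have N1 := N (mxvec_index 0 0); have N2 := N (mxvec_index 1 0).
rewrite sum4 !big_ord2 addrA in N1; rewrite sum4 !big_ord2 addrA in N2.
have [PA QA] := @derive C _ _ _ _ _ _ _ _ (fun al be hab => (hcond al be hab).1).
have [PB _] := @derive C _ _ _ _ _ _ _ _ (fun al be hab => (hcond al be hab).2).
exact: (@key C _ _ _ _ _ _ _ _ N1 N2 PA QA PB).
Qed.
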